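(* For $q=p^h$ with $p$ prime and $h\geq1$, $$d\big(C(PG(2,q))^\perp\big)\leq 2q+1-\frac{q-1}{p-1}.$$
   Context: $C(PG(2,q))$ is the $\mathbb{F}_p$-span of the incidence vectors of the lines of $PG(2,q)$, with coordinates indexed by points. $C^\perp$ is its dual with respect to the standard scalar product over $\mathbb{F}_p$. $d(\cdot)$ is the minimum nonzero weight. *)

(* Defs.v *)
From HB Require Import structures.
From mathcomp Require Import all_boot all_order all_algebra all_field.
Set Implicit Arguments. Unset Strict Implicit. Unset Printing Implicit Defensive.
Import GRing.Theory.
Local Open Scope ring_scope.

(* A point (resp. line) is a 1-dimensional subspace of F^3, represented by its
   unique normalized spanning vector: nonzero, first nonzero coordinate = 1. *)
Definition normalized (F : finFieldType) (x : 'rV[F]_3) : bool :=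
  [exists i : 'I_3, (x 0 i == 1) && [forall j : 'I_3, (j < i)%N ==> (x 0 j == 0)]].

Definition PGpt (F : finFieldType) := {x : 'rV[F]_3 | normalized x}.
Definition PGline (F : finFieldType) := {x : 'rV[F]_3 | normalized x}.

Definition incident (F : finFieldType) (x : PGpt F) (l : PGline F) : bool :=
  \sum_(i < 3) (val x) 0 i * (val l) 0 i == 0.

Notation word F p := {ffun PGpt F -> 'F_p}.

Definition inc_vec (F : finFieldType) (p : nat) (l : PGline F) : word F p :=
  [ffun x => (incident x l)%:R].

Definition code (F : finFieldType) (p : nat) : pred (word F p) :=
  fun c => [exists a : {ffun PGline F -> 'F_p}, c == [ffun x => \sum_(l : PGline F) a l * inc_vec p l x]].

Definition dotw (F : finFieldType) (p : nat) (c w : word F p) : 'F_p :=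
  \sum_(x : PGpt F) c x * w x.

Definition dual_code (F : finFieldType) (p : nat) (C : pred (word F p)) : pred (word F p) :=
  fun c => [forall w : word F p, (w \in C) ==> (dotw c w == 0)].

Definition wt (F : finFieldType) (p : nat) (c : word F p) : nat := #|[set x | c x != 0]|.

(* minimum nonzero weight; the empty minimum is #|points|.+1 (larger than any weight) *)
Definition min_weight (F : finFieldType) (p : nat) (C : pred (word F p)) : nat :=
  \big[minn/#|{: PGpt F}|.+1]_(c : word F p | (c \in C) && (c != 0)) wt c.

(* Main.v *)
Require Import Defs.
From HB Require Import structures.
From mathcomp Require Import all_boot all_order all_algebra all_field.
From mathcomp Require Import ring zify.
Set Implicit Arguments. Unset Strict Implicit. Unset Printing Implicit Defensive.
Import GRing.Theory.
Local Open Scope ring_scope.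


Notation i0 := (@Ordinal 3 0 isT).
Notation i1 := (@Ordinal 3 1 isT).
Notation i2 := (@Ordinal 3 2 isT).

Lemma ord3P (P : 'I_3 -> Prop) : P i0 -> P i1 -> P i2 -> forall i, P i.
Proof.
move=> H0 H1 H2 [[|[|[|i]]] Hi] //.
- by rewrite (_ : Ordinal Hi = i0) //; apply: val_inj.
- by rewrite (_ : Ordinal Hi = i1) //; apply: val_inj.
- by rewrite (_ : Ordinal Hi = i2) //; apply: val_inj.
Qed.

Definition mkv (F : finFieldType) (a b c : F) : 'rV[F]_3 :=
  \row_(i < 3) [:: a; b; c]`_i.

Lemma mkv0 (F : finFieldType) (a b c : F) : mkv a b c 0 i0 = a.
Proof. by rewrite mxE. Qed.
Lemma mkv1 (F : finFieldType) (a b c : F) : mkv a b c 0 i1 = b.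
Proof. by rewrite mxE. Qed.
Lemma mkv2 (F : finFieldType) (a b c : F) : mkv a b c 0 i2 = c.
Proof. by rewrite mxE. Qed.

Lemma zero_i3 : (0 : 'I_1) = 0. Proof. by []. Qed.

Lemma normP (F : finFieldType) (v : 'rV[F]_3) : normalized v =
  [|| v 0 i0 == 1, (v 0 i0 == 0) && (v 0 i1 == 1) |
      [&& v 0 i0 == 0, v 0 i1 == 0 & v 0 i2 == 1]].
Proof.
apply/existsP/idP.
- move=> [i /andP[Hi /forallP Hj]]; move: i Hi Hj; apply: ord3P => Hi Hj.
  + by rewrite Hi.
  + by have := Hj i0; rewrite /= => ->; rewrite Hi orbT.
  + by have := Hj i0; have := Hj i1; rewrite /= => -> ->; rewrite Hi !orbT.
- case/or3P.
  + by move=> H; exists i0; rewrite H; apply/forallP; apply: ord3P.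
  + by move=> /andP[H0 H1]; exists i1; rewrite H1; apply/forallP; apply: ord3P.
  + by move=> /and3P[H0 H1 H2]; exists i2; rewrite H2; apply/forallP; apply: ord3P; rewrite ?H0 ?H1.
Qed.


Lemma sum3 (R : finFieldType) (f : 'I_3 -> R) : \sum_(i < 3) f i = f i0 + f i1 + f i2.
Proof.
rewrite !big_ord_recr big_ord0 /= add0r.
by congr (f _ + f _ + f _); apply: val_inj.
Qed.

Lemma incE (F : finFieldType) (x : PGpt F) (l : PGline F) :
  incident x l = (val x 0 i0 * val l 0 i0 + val x 0 i1 * val l 0 i1 + val x 0 i2 * val l 0 i2 == 0).
Proof. by rewrite /incident sum3. Qed.

Lemma n1 (F : finFieldType) (x y : F) : normalized (mkv 1 x y).
Proof. by rewrite normP mkv0 eqxx. Qed.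
Lemma n2 (F : finFieldType) (s : F) : normalized (mkv 0 1 s).
Proof. by rewrite normP mkv0 mkv1 !eqxx orbT. Qed.
Lemma n3 (F : finFieldType) : normalized (mkv 0 0 (1 : F)).
Proof. by rewrite normP mkv0 mkv1 mkv2 !eqxx !orbT. Qed.

Definition pt1 (F : finFieldType) (x y : F) : PGpt F := exist (fun v => normalized v) _ (n1 x y).
Definition pt2 (F : finFieldType) (s : F) : PGpt F := exist (fun v => normalized v) _ (n2 s).
Definition pt3 (F : finFieldType) : PGpt F := exist (fun v => normalized v) _ (n3 F).

Definition enc (F : finFieldType) (t : ((F * F) + (F + unit))%type) : PGpt F :=
  match t with
  | inl xy => pt1 xy.1 xy.2
  | inr (inl s) => pt2 s
  | inr (inr _) => pt3 F
  end.

Definition dec (F : finFieldType) (P : PGpt F) : ((F * F) + (F + unit))%type :=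
  let v := val P in
  if v 0 i0 == 1 then inl (v 0 i1, v 0 i2)
  else if v 0 i1 == 1 then inr (inl (v 0 i2)) else inr (inr tt).

Lemma enc_bij (F : finFieldType) : bijective (@enc F).
Proof.
exists (@dec F).
- have h01 : (0 == 1 :> F) = false by rewrite eq_sym oner_eq0.
  case=> [[x y]|[s|[]]]; rewrite /dec /= ?mkv0 ?mkv1 ?mkv2 ?h01 ?eqxx //.
- move=> P; apply: val_inj; have := valP P; rewrite normP /dec.
  case/or3P => [H|/andP[H0 H1]|/and3P[H0 H1 H2]].
  + rewrite H /=; apply/rowP.
    apply: ord3P; rewrite ?mkv0 ?mkv1 ?mkv2 //; exact/esym/eqP.
  + rewrite (eqP H0) eq_sym oner_eq0 H1 /=; apply/rowP; apply: ord3P;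
    rewrite ?mkv0 ?mkv1 ?mkv2 //; exact/esym/eqP.
  + rewrite (eqP H0) (eqP H1) eq_sym oner_eq0 /=; apply/rowP; apply: ord3P;
    rewrite ?mkv0 ?mkv1 ?mkv2 //; exact/esym/eqP.
Qed.

Lemma sum_pts (F : finFieldType) (R : Type) (idx : R) (op : Monoid.com_law idx)
  (phi : PGpt F -> R) :
  \big[op/idx]_(P : PGpt F) phi P =
  op (\big[op/idx]_(x : F) \big[op/idx]_(y : F) phi (pt1 x y))
     (op (\big[op/idx]_(s : F) phi (pt2 s)) (phi (pt3 F))).
Proof.
rewrite (reindex (@enc F)); last by apply: onW_bij; apply: enc_bij.
rewrite big_sumType big_sumType pair_big /=.
congr (op _ (op _ _)).
by rewrite (big_pred1 tt) // => -[].
Qed.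


Definition inS (F : finFieldType) (p : nat) (m : F) : bool :=
  [exists a : F, (a != 0) && (m == a ^+ p.-1)].

Lemma frobB (F : finFieldType) (p : nat) (chF : p \in [pchar F]) (x y : F) :
  (x - y) ^+ p = x ^+ p - y ^+ p.
Proof.
by rewrite -!(pFrobenius_autE chF) (pFrobenius_autB_comm chF) //; apply: mulrC.
Qed.

Lemma frobM (F : finFieldType) (p : nat) (x y : F) :
  (x * y) ^+ p = x ^+ p * y ^+ p.
Proof. by rewrite exprMn. Qed.

Lemma nat_inj_p (F : finFieldType) (p : nat) (chF : p \in [pchar F]) (i j : nat) :
  (i < p)%N -> (j < p)%N -> (i%:R : F) = j%:R -> i = j.
Proof.
wlog le_ij : i j / (i <= j)%N.
  move=> W Hi Hj E; case: (leqP i j) => H; first exact: W.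
  by apply/esym/W => //; apply: ltnW.
move=> Hi Hj E.
have : (p %| j - i)%N by rewrite (dvdn_pcharf chF) natrB // E subrr.
have : (j - i < p)%N by apply: leq_ltn_trans Hj; apply: leq_subr.
move=> lt dv; move: dv lt (subnKC le_ij); case: (j - i)%N => [|k].
  by rewrite addn0.
by move=> dv lt _; move/(dvdn_leq (ltn0Sn k)): dv; rewrite leqNgt lt.
Qed.

Lemma Rcard (F : finFieldType) (p : nat) (chF : p \in [pchar F]) :
  #|[set y : F | y ^+ p == y]| = p.
Proof.
have pp : prime p := pcharf_prime chF.
have p1 : (1 < p)%N := prime_gt1 pp.
apply/eqP; rewrite eqn_leq; apply/andP; split.
- set R := [set y : F | y ^+ p == y].
  have nz : ('X^p - 'X : {poly F}) != 0.
    by rewrite -size_poly_eq0 size_polyDl ?size_polyXn // size_polyN size_polyX ltnS.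
  have := max_poly_roots nz (rs := enum R).
  rewrite enum_uniq cardE size_polyDl ?size_polyXn ?size_polyN ?size_polyX ?ltnS //.
  move=> H; apply: H => //; apply/allP => y.
  by rewrite mem_enum inE /root !hornerE subr_eq0.
- have inj : injective (fun i : 'I_p => ((i : nat)%:R : F)).
    by move=> i j /(nat_inj_p chF (ltn_ord i) (ltn_ord j)) /val_inj.
  apply: (@leq_trans #|(fun i : 'I_p => ((i : nat)%:R : F)) @: setT|).
    by rewrite card_imset // cardsT card_ord.
  apply: subset_leq_card; apply/subsetP => y /imsetP[i _ ->].
  by rewrite inE -(pFrobenius_autE chF) pFrobenius_aut_nat.
Qed.


Lemma K0card (F : finFieldType) (p : nat) (chF : p \in [pchar F]) (m : F) :
  inS p m -> #|[set x : F | x ^+ p == m * x]| = p.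
Proof.
have p0 : (0 < p)%N := prime_gt0 (pcharf_prime chF).
case/existsP => a /andP[a0 /eqP ->].
have ap : a ^+ p = a ^+ p.-1 * a by rewrite -exprSr prednK.
have -> : [set x | x ^+ p == a ^+ p.-1 * x] = (fun y => a * y) @: [set y : F | y ^+ p == y].
  apply/setP => x; rewrite inE; apply/idP/imsetP.
  - move=> /eqP E; exists (x / a); last by rewrite mulrC divfK.
    rewrite inE expr_div_n E ap; apply/eqP; field.
    by rewrite a0 expf_neq0.
  - by move=> [y /[!inE] /eqP E ->]; rewrite exprMn E ap mulrA.
by rewrite card_imset ?(Rcard chF) //; apply: mulfI.
Qed.

Lemma key (F : finFieldType) (p : nat) (chF : p \in [pchar F]) (m b : F) :
  (#|[set x : F | x ^+ p == m * x + b]|%:R : 'F_p) = (~~ inS p m)%:R.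
Proof.
have pp : prime p := pcharf_prime chF.
have p0 : (0 < p)%N := prime_gt0 pp.
pose g (x : F) := x ^+ p - m * x.
have gB x y : g (x - y) = g x - g y by rewrite /g (frobB chF); ring.
have -> : [set x | x ^+ p == m * x + b] = [set x | g x == b].
  by apply/setP => x; rewrite !inE /g subr_eq addrC.
case: (boolP (inS p m)) => Hm /=.
- case: (pickP [pred x | g x == b]) => [x0 /= /eqP Hx0 | none].
  + have -> : [set x | g x == b] = (fun k => k + x0) @: [set x | x ^+ p == m * x].
      apply/setP => x; rewrite inE; apply/idP/imsetP.
      * move=> /eqP E; exists (x - x0); last by rewrite subrK.
        by rewrite inE -subr_eq0 -/(g _) gB E Hx0 subrr.
      * move=> [k /[!inE] /eqP E ->].
        have : g k = 0 by rewrite /g E subrr.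
        by rewrite -{1}(addrK x0 k) gB Hx0 => /eqP; rewrite subr_eq0.
    by rewrite card_imset ?(K0card chF) ?pchar_Fp_0 //; apply: addIr.
  + by rewrite (_ : [set x | g x == b] = set0) ?cards0 //; apply/setP => x; rewrite !inE; exact: none.
- have ginj : injective g.
    move=> x y E; apply/eqP; rewrite -subr_eq0; apply/negP => /negP nz.
    move/negP: Hm; apply; apply/existsP; exists (x - y); rewrite nz /=.
    have := gB x y; rewrite E subrr /g => /eqP; rewrite subr_eq0 => /eqP H.
    apply/eqP; apply: (mulIf nz); rewrite -H -exprSr prednK //.
  have [x0 Hx0] : exists x0, g x0 = b.
    by have /codomP[x ->] := injF_onto ginj b; exists x.
  rewrite (_ : [set x | g x == b] = [set x0]) ?cards1 //.
  by apply/setP => x; rewrite !inE -Hx0 (inj_eq ginj).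
Qed.

Lemma Scard (F : finFieldType) (p : nat) (chF : p \in [pchar F]) :
  (#|[set m : F | inS p m]| * p.-1 = #|F|.-1)%N.
Proof.
have p0 : (0 < p)%N := prime_gt0 (pcharf_prime chF).
rewrite -(cardC1 (0 : F)).
have -> : #|predC1 (0 : F)| = #|[set x : F | x != 0]|.
  by apply: eq_card => x; rewrite !inE.
rewrite -sum_nat_cond_const -sum1_card.
rewrite [RHS](partition_big (fun x : F => x ^+ p.-1) (fun m => inS p m)).
  apply: eq_bigr => m Hm.
  rewrite sum1dep_card.
  have -> : #|[set x | (x \in [set x : F | x != 0]) && (x ^+ p.-1 == m)]| =
            #|[set x : F | x ^+ p == m * x] :\ 0|.
    apply: eq_card => x; rewrite !inE; case: (x =P 0) => //= /eqP nz.
    have xp : x ^+ p = x ^+ p.-1 * x by rewrite -exprSr prednK.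
    rewrite xp; apply/eqP/eqP => [-> //|E]; exact: (mulIf nz E).
  have := cardsD1 0 [set x : F | x ^+ p == m * x].
  rewrite (K0card chF Hm) inE expr0n mulr0 eqn0Ngt p0 /= eqxx.
  by move/(congr1 predn).
move=> x; rewrite inE => nz; apply/existsP; exists x; by rewrite nz eqxx.
Qed.


Definition isg (F : finFieldType) (p : nat) (P : PGpt F) : bool :=
  (val P 0 i0 == 1) && (val P 0 i2 == val P 0 i1 ^+ p).
Definition isb (F : finFieldType) (p : nat) (P : PGpt F) : bool :=
  (val P 0 i0 == 0) && ((val P 0 i1 == 1) && ~~ inS p (val P 0 i2) || (val P 0 i1 == 0)).

Lemma z1 (F : finFieldType) : (0 == 1 :> F) = false.
Proof. by rewrite eq_sym oner_eq0. Qed.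

Definition cw (F : finFieldType) (p : nat) : word F p :=
  [ffun P => (isg p P)%:R - (isb p P)%:R].
Arguments cw {F} p.

Lemma cw1 (F : finFieldType) (p : nat) (x y : F) : cw p (pt1 x y) = (y == x ^+ p)%:R.
Proof.
by rewrite ffunE /isg /isb /= mkv0 mkv1 mkv2 eqxx oner_eq0 subr0.
Qed.
Lemma cw2 (F : finFieldType) (p : nat) (s : F) : cw p (pt2 s) = - (~~ inS p s)%:R.
Proof.
by rewrite ffunE /isg /isb /= mkv0 mkv1 mkv2 !eqxx ?z1 ?oner_eq0 /= orbF sub0r.
Qed.
Lemma cw3 (F : finFieldType) (p : nat) : cw p (pt3 F) = - 1.
Proof.
by rewrite ffunE /isg /isb /= mkv0 mkv1 mkv2 !eqxx ?z1 ?oner_eq0 /= sub0r.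
Qed.

Lemma inc1 (F : finFieldType) (x y : F) (l : PGline F) :
  incident (pt1 x y) l = (val l 0 i0 + x * val l 0 i1 + y * val l 0 i2 == 0).
Proof. by rewrite incE /= mkv0 mkv1 mkv2 mul1r. Qed.
Lemma inc2 (F : finFieldType) (s : F) (l : PGline F) :
  incident (pt2 s) l = (val l 0 i1 + s * val l 0 i2 == 0).
Proof. by rewrite incE /= mkv0 mkv1 mkv2 mul1r mul0r add0r. Qed.
Lemma inc3 (F : finFieldType) (l : PGline F) :
  incident (pt3 F) l = (val l 0 i2 == 0).
Proof. by rewrite incE /= mkv0 mkv1 mkv2 mul1r !mul0r !add0r. Qed.

Lemma sum_eq1 (T : finType) (R : ringType) (a : T) (f : T -> R) :
  \sum_y (y == a)%:R * f y = f a.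
Proof.
rewrite (bigD1 a) //= eqxx mul1r big1 ?addr0 // => y /negbTE ->; by rewrite mul0r.
Qed.

Lemma sum_card (T : finType) (R : ringType) (P : pred T) :
  \sum_x (P x)%:R = #|[set x | P x]|%:R :> R.
Proof.
rewrite -sum1_card natr_sum [RHS]big_mkcond /=; apply: eq_bigr => x _; rewrite inE.
by case: (P x).
Qed.

Lemma predn_Fp (p n : nat) : prime p -> (p %| n)%N -> (0 < n)%N ->
  (n.-1)%:R = - 1 :> 'F_p.
Proof.
move=> pp dv n0; apply/eqP; rewrite -subr_eq0 opprK natr1 prednK //.
by rewrite -(dvdn_pcharf (pchar_Fp pp)).
Qed.

Lemma Scard_Fp (F : finFieldType) (p h : nat) (pp : prime p) (h0 : (0 < h)%N)
   (cF : #|F| = (p ^ h)%N) (chF : p \in [pchar F]) :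
  #|[set m : F | inS p m]|%:R = 1 :> 'F_p.
Proof.
have dq : (p %| p ^ h)%N by rewrite -(prednK h0) expnS dvdn_mulr.
have := congr1 (fun n => n%:R : 'F_p) (Scard chF) => /=.
rewrite natrM (predn_Fp pp) ?prime_gt0 // (predn_Fp pp) ?cF ?expn_gt0 ?prime_gt0 //.
by rewrite mulrN1 => /eqP; rewrite eqr_opp => /eqP.
Qed.

Lemma sum_ptsR (F : finFieldType) (R : ringType) (phi : PGpt F -> R) :
  \sum_(P : PGpt F) phi P =
  \sum_(x : F) \sum_(y : F) phi (pt1 x y) + (\sum_(s : F) phi (pt2 s) + phi (pt3 F)).
Proof. exact: (sum_pts _ phi). Qed.

Lemma sum_ptsN (F : finFieldType) (phi : PGpt F -> nat) :
  (\sum_(P : PGpt F) phi P =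
  \sum_(x : F) \sum_(y : F) phi (pt1 x y) + (\sum_(s : F) phi (pt2 s) + phi (pt3 F)))%N.
Proof. exact: (sum_pts _ phi). Qed.

Lemma linesum (F : finFieldType) (p h : nat) (pp : prime p) (h0 : (0 < h)%N)
   (cF : #|F| = (p ^ h)%N) (chF : p \in [pchar F]) (l : PGline F) :
  \sum_(P : PGpt F) cw p P * inc_vec p l P = 0.
Proof.
rewrite sum_ptsR.
under eq_bigr => x _ do under eq_bigr => y _ do rewrite cw1 /inc_vec ffunE inc1.
under [X in _ + (X + _)]eq_bigr => s _ do rewrite cw2 /inc_vec ffunE inc2.
rewrite cw3 /inc_vec ffunE inc3.
under eq_bigr => x _ do rewrite (sum_eq1 (x ^+ p) (fun y => (val l 0 i0 + x * val l 0 i1 + y * val l 0 i2 == 0)%:R)).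
set l0 := val l 0 i0; set l1 := val l 0 i1; set l2 := val l 0 i2.
have hl := valP l; rewrite normP -/l0 -/l1 -/l2 in hl.
case: (eqVneq l2 0) => [l20|l2nz].
- rewrite l20.
  under eq_bigr => x _ do rewrite mulr0 addr0.
  under [X in _ + (X + _)]eq_bigr => s _ do rewrite mulr0 addr0.
  case: (eqVneq l1 0) => [l10|l1nz].
  + rewrite l10 l20 (z1 F) !andbF !orbF in hl; rewrite l10.
    have l01 : l0 = 1 by apply/eqP.
    under eq_bigr => x _ do rewrite mulr0 addr0 l01 oner_eq0.
    rewrite big1 // add0r.
    have nS s : (~~ inS p s)%:R = 1 - (inS p s)%:R :> 'F_p.
      by case: (inS p s); rewrite ?subr0 ?subrr.
    under eq_bigr => s _ do rewrite mulr1 nS.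
    rewrite sumrN sumrB sum_card (Scard_Fp pp h0 cF chF) sumr_const cardT -cardE cF.
    have pq0 : ((p ^ h)%:R : 'F_p) = 0.
      apply/eqP; rewrite -(dvdn_pcharf (pchar_Fp pp)).
      by rewrite -(prednK h0) expnS dvdn_mulr.
    by rewrite pq0 /= mulr1n sub0r opprK mulN1r subrr.
  + rewrite [X in _ + (X + _)]big1; last by move=> s _; rewrite /= mulr0n mulr0.
    rewrite /= mulr1n.
    rewrite add0r.
    have E x : (l0 + x * l1 == 0) = (x == - l0 / l1).
      have -> : l0 + x * l1 = (x - (- l0 / l1)) * l1 by field.
      by rewrite mulf_eq0 (negbTE l1nz) orbF subr_eq0.
    under eq_bigr => x _ do rewrite E -[_%:R]mulr1.
    by rewrite sum_eq1 mulN1r subrr.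
- rewrite mulr0 addr0.
  set m := - l1 / l2; set b := - l0 / l2.
  have E1 x y : (l0 + x * l1 + y * l2 == 0) = (y == m * x + b).
    have -> : l0 + x * l1 + y * l2 = (y - (m * x + b)) * l2 by rewrite /m /b; field.
    by rewrite mulf_eq0 (negbTE l2nz) orbF subr_eq0.
  have E2 s : (l1 + s * l2 == 0) = (s == m).
    have -> : l1 + s * l2 = (s - m) * l2 by rewrite /m; field.
    by rewrite mulf_eq0 (negbTE l2nz) orbF subr_eq0.
  under eq_bigr => x _ do rewrite E1.
  under [X in _ + X]eq_bigr => s _ do rewrite E2 mulrC.
  by rewrite sum_card (key chF) sum_eq1 subrr.
Qed.


Lemma dual_mem (F : finFieldType) (p h : nat) (pp : prime p) (h0 : (0 < h)%N)
   (cF : #|F| = (p ^ h)%N) (chF : p \in [pchar F]) :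
  cw p \in dual_code (@code F p).
Proof.
rewrite unfold_in /dual_code; apply/forallP => w; apply/implyP.
rewrite unfold_in /code => /existsP[a /eqP ->].
rewrite /dotw.
apply/eqP; under eq_bigr => x _ do rewrite [X in _ * X]ffunE mulr_sumr.
rewrite exchange_big big1 // => l _.
under eq_bigr => x _ do rewrite mulrCA.
by rewrite -mulr_sumr (linesum pp h0 cF chF) mulr0.
Qed.

Lemma card_sum (T : finType) (Q : pred T) : #|[set x | Q x]| = (\sum_x (Q x : nat))%N.
Proof.
rewrite -sum1_card big_mkcond /=; apply: eq_bigr => x _; rewrite inE.
by case: (Q x).
Qed.

Lemma bigmin_le (I : finType) (P : pred I) (f : I -> nat) z i :
  P i -> (\big[minn/z]_(j | P j) f j <= f i)%N.
Proof.
move=> Pi; have : i \in index_enum I by rewrite mem_index_enum.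
elim: (index_enum I) => // j s IH.
rewrite inE big_cons => /orP[/eqP <-|/IH H]; first by rewrite Pi geq_minl.
by case: (P j) => //; exact: leq_trans (geq_minr _ _) H.
Qed.

Lemma wt_cw (F : finFieldType) (p : nat) (pp : prime p) :
  wt (cw p : word F p) = (#|F| + ((#|F| - #|[set m : F | inS p m]|) + 1))%N.
Proof.
have nzb (b : bool) : ((b%:R : 'F_p) != 0) = b.
  by case: b; rewrite ?eqxx // oner_eq0.
rewrite /wt card_sum sum_ptsN cw3 oppr_eq0 oner_eq0 /= addn1.
under eq_bigr => x _ do under eq_bigr => y _ do rewrite cw1 nzb.
under [X in (_ + X.+1)%N = _]eq_bigr => s _ do rewrite cw2 oppr_eq0 nzb.
have h1 (a : F) : (\sum_y (y == a : nat))%N = 1%N.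
  by rewrite -card_sum (_ : [set y | y == a] = [set a]) ?cards1 //; apply/setP => y; rewrite !inE.
under eq_bigr => x _ do rewrite h1.
have -> : (\sum_(x : F) 1 = #|F|)%N.
  by have := card_sum (fun _ : F => true); rewrite cardsT => <-.
rewrite -card_sum (_ : [set s | ~~ inS p s] = ~: [set s | inS p s]).
  by rewrite cardsCs setCK addn1.
by apply/setP => s; rewrite !inE.
Qed.

Local Close Scope ring_scope.

Theorem mainTheorem19 (F : finFieldType) (p h : nat) :
  prime p -> (0 < h)%N -> #|F| = (p ^ h)%N ->
  (min_weight (dual_code (@code F p)) <=
     (2 * (p ^ h) + 1) - ((p ^ h) - 1) %/ (p - 1))%N.
Proof.
move=> pp h0 cF.
have chF : (p \in [pchar F])%R := card_finPcharP cF pp.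
rewrite /min_weight; apply: leq_trans (bigmin_le _ _ (i := cw p) _) _.
  rewrite (dual_mem pp h0 cF chF) /=; apply/eqP => E.
  have := congr1 (fun c : word F p => c (pt1 0%R 0%R)) E.
  rewrite cw1 ffunE expr0n eqn0Ngt prime_gt0 //= eqxx => /eqP.
  by rewrite oner_eq0.
rewrite (wt_cw F pp) -cF.
have S := Scard chF.
have Sle : (#|[set m : F | inS p m]| <= #|F|)%N by apply: max_card.
have -> : ((#|F| - 1) %/ (p - 1) = #|[set m : F | inS p m]|)%N.
  by rewrite !subn1 -S mulnK // -subn1 subn_gt0 prime_gt1.
move: Sle; clear; move: (#|F|) (#|[set m : F | inS p m]|) => q s Hs.
lia.
Qed.
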